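(* Let $K$ be a flag simplicial complex with a hereditary ordering $\succ$, and let $r$ be a positive integer. Suppose that for any two simplices $\sigma,\tau\in K$ with $\dim\sigma=\dim\tau=r$ and $\mu(\sigma)=\mu(\tau)$ we have $\sigma\cup\tau\in K$. Then for any two simplices $\sigma,\tau\in K$ with $\dim\sigma=\dim\tau>r$ and $\mu(\sigma)=\mu(\tau)$ we also have $\sigma\cup\tau\in K$.
   Context: $K$ is a finite simplicial complex (family of subsets of a finite vertex set containing $\emptyset$, closed under subsets); $\dim\sigma=|\sigma|-1$. $K$ is flag if whenever vertices $v_0,\dots,v_q$ are pairwise joined by edges of $K$, $\{v_0,\dots,v_q\}\in K$. For a strict total ordering $\succ$ of $K$ and non-empty $\sigma$, $\mu(\sigma)$ is the $\succ$-largest facet (codimension-one face) of $\sigma$; $\succ$ is hereditary if $\sigma\succ\tau$ whenever $\dim\sigma>\dim\tau$, and $\sigma\succ\tau$ whenever $\mu(\sigma)\succ\mu(\tau)$. *)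

(* Defs.v *)
From mathcomp Require Import all_boot.
Set Implicit Arguments. Unset Strict Implicit. Unset Printing Implicit Defensive.

(* Simplex dimension: dim s = #|s| - 1, so we compare cardinalities. *)
Definition simplicial_complex (V : finType) (K : {set {set V}}) : Prop :=
  set0 \in K /\ forall s t : {set V}, s \in K -> t \subset s -> t \in K.

Definition flag (V : finType) (K : {set {set V}}) : Prop :=
  forall S : {set V},
    (forall v, v \in S -> [set v] \in K) ->
    (forall v w, v \in S -> w \in S -> v != w -> [set v; w] \in K) ->
    S \in K.

(* succ s t means  s ≻ t.  A strict total ordering of (the simplices of) K. *)
Definition strict_total_on (V : finType) (K : {set {set V}}) (succ : rel {set V}) : Prop :=
  [/\ forall s, s \in K -> ~~ succ s s,
      forall s t u, s \in K -> t \in K -> u \in K -> succ s t -> succ t u -> succ s u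
    & forall s t, s \in K -> t \in K -> s != t -> succ s t || succ t s].

Definition facet (V : finType) (t s : {set V}) : bool :=
  (t \subset s) && (#|t|.+1 == #|s|).

(* mu succ s : the succ-largest facet of s (set0 if none exists, which does
   not happen for non-empty simplices of K under a strict total ordering). *)
Definition mu (V : finType) (succ : rel {set V}) (s : {set V}) : {set V} :=
  odflt set0 [pick t | facet t s &&
                 [forall t', (facet t' s && (t' != t)) ==> succ t t']].

Definition hereditary (V : finType) (K : {set {set V}}) (succ : rel {set V}) : Prop :=
  (forall s t, s \in K -> t \in K -> #|s| > #|t| -> succ s t) /\
  (forall s t, s \in K -> t \in K -> s != set0 -> t != set0 ->
     succ (mu succ s) (mu succ t) -> succ s t).

(* Main.v *)
Require Import Defs.
From mathcomp Require Import all_boot.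
Set Implicit Arguments. Unset Strict Implicit. Unset Printing Implicit Defensive.

Lemma seq_max (T : eqType) (P : pred T) (succ : rel T) (s : seq T) :
  (forall x, x \in s -> P x) ->
  (forall a b c, P a -> P b -> P c -> succ a b -> succ b c -> succ a c) ->
  (forall a b, P a -> P b -> a != b -> succ a b || succ b a) ->
  s != [::] -> exists2 m, m \in s & forall t, t \in s -> t != m -> succ m t.
Proof.
move=> HP Htr Htot; elim: s HP => [//|x s IH] HP _.
case: (altP (s =P [::])) => [-> | ne].
  exists x; first by rewrite inE.
  by move=> t; rewrite inE => /eqP ->; rewrite eqxx.
have HP' : forall y, y \in s -> P y by move=> y ys; apply: HP; rewrite inE ys orbT.
have [m ms Hm] := IH HP' ne.
have Px := HP x (mem_head _ _).
have Pm := HP' m ms.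
case: (altP (x =P m)) => [exm | nxm].
  exists m; first by rewrite inE ms orbT.
  move=> t; rewrite inE => /orP[/eqP -> | ts]; first by rewrite exm eqxx.
  exact: Hm.
case/orP: (Htot _ _ Px Pm nxm) => H.
  exists x; first exact: mem_head.
  move=> t; rewrite inE => /orP[/eqP -> | ts]; first by rewrite eqxx.
  move=> _; case: (altP (t =P m)) => [-> //| ntm].
  exact: (Htr _ _ _ Px Pm (HP' t ts) H (Hm t ts ntm)).
exists m; first by rewrite inE ms orbT.
move=> t; rewrite inE => /orP[/eqP -> | ts]; first by move=> _.
exact: Hm.
Qed.

Lemma mu_spec (V : finType) (K : {set {set V}}) (succ : rel {set V}) x :
  simplicial_complex K -> strict_total_on K succ -> x \in K -> x != set0 ->
  facet (mu succ x) x /\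
  (forall t', facet t' x -> t' != mu succ x -> succ (mu succ x) t').
Proof.
move=> [K0 Kcl] [Hirr Htr Htot] xK xne.
have FK : forall t, facet t x -> t \in K.
  by move=> t /andP[sub _]; exact: Kcl sub.
have [a ax] := set0Pn _ xne.
have Fa : facet (x :\ a) x.
  by rewrite /facet subD1set /= (cardsD1 a x) ax.
have FK' : forall y, y \in enum (fun t => facet t x) -> y \in K.
  by move=> y; rewrite mem_enum; exact: FK.
have ne : enum (fun t => facet t x) != [::].
  have : x :\ a \in enum (fun t => facet t x) by rewrite mem_enum.
  by case: (enum _).
have [m ms Hm] := @seq_max _ (fun t => t \in K) succ (enum (fun t => facet t x)) FK'
  (fun a b c Pa Pb Pc => Htr a b c Pa Pb Pc)
  (fun a b Pa Pb => Htot a b Pa Pb) ne.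
rewrite /mu; case: pickP => [t /andP[Ft /forallP H] | Hn] /=.
  split => // t' Ft' nt; have := H t'; by rewrite Ft' nt.
exfalso; move: (Hn m); rewrite mem_enum in ms; have -> : facet m x := ms; rewrite /=.
move/negbT/negP; apply; apply/forallP => t'; apply/implyP => /andP[Ft' nt].
by apply: Hm; rewrite ?mem_enum.
Qed.

From mathcomp Require Import zify.

Theorem lemma6 (V : finType) (K : {set {set V}}) (succ : rel {set V}) (r : nat) :
  simplicial_complex K -> flag K -> strict_total_on K succ -> hereditary K succ ->
  0 < r ->
  (forall s t, s \in K -> t \in K -> #|s| = r.+1 -> #|t| = r.+1 ->
     mu succ s = mu succ t -> s :|: t \in K) ->
  forall s t, s \in K -> t \in K -> #|s| = #|t| -> r.+1 < #|s| ->
     mu succ s = mu succ t -> s :|: t \in K.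
Proof.
move=> HK Hflag Hord [Hh1 Hh2] r0 Hbase.
have [K0 Kcl] := HK; have [Hirr Htr Htot] := Hord.
suff main : forall k s t, s \in K -> t \in K -> #|s| = r.+1 + k -> #|t| = r.+1 + k ->
    mu succ s = mu succ t -> s :|: t \in K.
  move=> s t sK tK st lt mst.
  apply: (main (#|s| - r.+1)) => //; last rewrite -st; by rewrite subnKC // ltnW.
elim=> [|k IH] s t sK tK cs ct mst; first by apply: Hbase => //; rewrite ?cs ?ct ?addn0.
set rho := mu succ s.
have sne : s != set0 by rewrite -card_gt0 cs addnS.
have [Fs Ms] := mu_spec HK Hord sK sne.
move: (Fs) => /andP[rs /eqP crs].
have rK : rho \in K by apply: Kcl sK rs.
have rne : rho != set0 by rewrite -card_gt0 -ltnS crs cs addnS.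
set rho' := mu succ rho.
have [Fr Mr] := mu_spec HK Hord rK rne.
move: (Fr) => /andP[rr /eqP crr].
have sub : forall s0 u, s0 \in K -> mu succ s0 = rho -> #|s0| = r.+1 + k.+1 ->
    u \in s0 -> u \notin rho ->
    [/\ u |: rho' \in K, #|u |: rho'| = r.+1 + k & mu succ (u |: rho') = rho'].
  move=> s0 u s0K m0 c0 us0 nur.
  have s0ne : s0 != set0 by rewrite -card_gt0 c0 addnS.
  have [Fs0 Ms0] := mu_spec HK Hord s0K s0ne.
  rewrite m0 in Fs0 Ms0.
  move: (Fs0) => /andP[rs0 /eqP crs0].
  have nur' : u \notin rho' by apply: contra nur; apply: (subsetP rr).
  have ss0 : u |: rho' \subset s0.
    by rewrite subUset sub1set us0 (subset_trans rr rs0).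
  have s'K : u |: rho' \in K by apply: Kcl s0K ss0.
  have cs' : #|u |: rho'| = #|rho'|.+1 by rewrite cardsU1 nur'.
  split => //.
    by apply/eqP; rewrite cs' crr -eqSS crs0 c0 addnS.
  have s'ne : u |: rho' != set0 by rewrite -card_gt0 cs'.
  have [Fm Mm] := mu_spec HK Hord s'K s'ne.
  apply/eqP; apply: contraT => nm.
  have rho'F : facet rho' (u |: rho') by rewrite /facet subsetUr cs' eqxx.
  have H1 : succ (mu succ (u |: rho')) rho' by apply: (Mm _ rho'F); rewrite eq_sym.
  have H2 := Hh2 _ _ s'K rK s'ne rne H1.
  have s'F : facet (u |: rho') s0.
    rewrite /facet ss0 cs' crr crs0 /=.
    exact: eqxx.
  have nsr : u |: rho' != rho.
    by apply/eqP => E; move: nur; rewrite -E setU11.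
  have H3 := Ms0 _ s'F nsr.
  by move: (Hirr _ rK); rewrite (Htr _ _ _ rK s'K rK H3 H2).
have tne : t != set0 by rewrite -card_gt0 ct addnS.
have [Ft _] := mu_spec HK Hord tK tne.
rewrite -mst -/rho in Ft; move: Ft => /andP[rt _].
have key : forall v w, v \in s -> v \notin t -> w \in t -> w \notin s ->
    [set v; w] \in K.
  move=> v w vs nvt wt nws.
  have nvr : v \notin rho by apply: contra nvt; apply: (subsetP rt).
  have nwr : w \notin rho by apply: contra nws; apply: (subsetP rs).
  have [K1 c1 m1] := sub s v sK erefl cs vs nvr.
  have [K2 c2 m2] := sub t w tK (esym mst) ct wt nwr.
  have U := IH _ _ K1 K2 c1 c2 (etrans m1 (esym m2)).
  apply: Kcl U _.
  by rewrite subUset !sub1set !inE !eqxx /= orbT.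
apply: Hflag => [v | v w].
  by rewrite inE => /orP[vs|vt]; [apply: Kcl sK _ | apply: Kcl tK _]; rewrite sub1set.
rewrite !inE => vS wS nvw.
have [vs|nvs] := boolP (v \in s); have [ws|nws] := boolP (w \in s).
- by apply: Kcl sK _; rewrite subUset !sub1set vs ws.
- have wt : w \in t by move: wS; rewrite (negbTE nws).
  have [vt|nvt] := boolP (v \in t).
    by apply: Kcl tK _; rewrite subUset !sub1set vt wt.
  exact: key.
- have vt : v \in t by move: vS; rewrite (negbTE nvs).
  have [wt|nwt] := boolP (w \in t).
    by apply: Kcl tK _; rewrite subUset !sub1set vt wt.
  by rewrite setUC; apply: key.
- have vt : v \in t by move: vS; rewrite (negbTE nvs).
  have wt : w \in t by move: wS; rewrite (negbTE nws).
  by apply: Kcl tK _; rewrite subUset !sub1set vt wt.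
Qed.
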